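(* Let $X$ be a real Hilbert space, let $f:X\to\mathbb{R}\cup\{+\infty\}$ be a proper $\Phi_{lsc}$-convex function and $\bar x\in\mathrm{dom}(f)$. If there exist $\rho\ge 0$ and $\delta>0$ such that $f(x)\ge f(\bar x)-\rho\|x-\bar x\|^2$ for all $x$ with $\|x-\bar x\|<\delta$, then there exists $\bar\rho\ge 0$ such that $f(x)\ge f(\bar x)-\bar\rho\|x-\bar x\|^2$ for all $x\in X$.
   Context: $\Phi_{lsc}$ is the class of functions $\varphi:X\to\mathbb{R}$, $\varphi(x)=-a\|x\|^2+\langle v,x\rangle+c$ with $a\ge0$, $v\in X^*$, $c\in\mathbb{R}$. $\mathrm{supp}(f):=\{\varphi\in\Phi_{lsc}:\varphi\le f \text{ on } X\}$. $f$ is $\Phi_{lsc}$-convex if $f=\sup\{\varphi:\varphi\in\mathrm{supp}(f)\}$ pointwise. $f$ is proper if $\mathrm{supp}(f)\ne\emptyset$ and $\mathrm{dom}(f):=\{x:f(x)<+\infty\}\neq\emptyset$. *)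

(* Defs.v *)
From Stdlib Require Import Reals Lra.
Open Scope R_scope.

Record HilbertSpace := {
  hcarrier :> Type;
  hzero : hcarrier;
  hadd : hcarrier -> hcarrier -> hcarrier;
  hopp : hcarrier -> hcarrier;
  hscal : R -> hcarrier -> hcarrier;
  hinner : hcarrier -> hcarrier -> R;
  hadd_assoc : forall x y z, hadd x (hadd y z) = hadd (hadd x y) z;
  hadd_comm : forall x y, hadd x y = hadd y x;
  hadd_zero : forall x, hadd x hzero = x;
  hadd_opp : forall x, hadd x (hopp x) = hzero;
  hscal_one : forall x, hscal 1 x = x;
  hscal_assoc : forall a b x, hscal a (hscal b x) = hscal (a * b) x;
  hscal_distr_l : forall a x y, hscal a (hadd x y) = hadd (hscal a x) (hscal a y);
  hscal_distr_r : forall a b x, hscal (a + b) x = hadd (hscal a x) (hscal b x);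
  hinner_sym : forall x y, hinner x y = hinner y x;
  hinner_add : forall x y z, hinner (hadd x y) z = hinner x z + hinner y z;
  hinner_scal : forall a x y, hinner (hscal a x) y = a * hinner x y;
  hinner_pos : forall x, 0 <= hinner x x;
  hinner_def : forall x, hinner x x = 0 -> x = hzero;
  hcomplete : forall u : nat -> hcarrier,
    (forall eps, 0 < eps -> exists N, forall m n, (N <= m)%nat -> (N <= n)%nat ->
        sqrt (hinner (hadd (u m) (hopp (u n))) (hadd (u m) (hopp (u n)))) < eps) ->
    exists l, forall eps, 0 < eps -> exists N, forall n, (N <= n)%nat ->
        sqrt (hinner (hadd (u n) (hopp l)) (hadd (u n) (hopp l))) < eps
}.

Arguments hzero {h}.
Arguments hadd {h}.
Arguments hopp {h}.
Arguments hscal {h}.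
Arguments hinner {h}.

Definition hsub {X : HilbertSpace} (x y : X) : X := hadd x (hopp y).
Definition hnorm {X : HilbertSpace} (x : X) : R := sqrt (hinner x x).

(** Topological dual X^*: continuous (= bounded) linear functionals. *)
Definition is_dual {X : HilbertSpace} (v : X -> R) : Prop :=
  (forall x y, v (hadd x y) = v x + v y) /\
  (forall a x, v (hscal a x) = a * v x) /\
  (exists C, forall x, Rabs (v x) <= C * hnorm x).

Inductive ERbar := Fin (r : R) | PInf.

Definition ER_le (a b : ERbar) : Prop :=
  match a, b with
  | _, PInf => True
  | PInf, Fin _ => False
  | Fin r, Fin s => r <= s
  end.

Definition in_Phi_lsc {X : HilbertSpace} (phi : X -> R) : Prop :=
  exists (a : R) (v : X -> R) (c : R),
    0 <= a /\ is_dual v /\ forall x, phi x = - a * (hnorm x)^2 + v x + c.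

Definition in_supp {X : HilbertSpace} (f : X -> ERbar) (phi : X -> R) : Prop :=
  in_Phi_lsc phi /\ forall x, ER_le (Fin (phi x)) (f x).

Definition phi_lsc_convex {X : HilbertSpace} (f : X -> ERbar) : Prop :=
  forall x,
    (forall phi, in_supp f phi -> ER_le (Fin (phi x)) (f x)) /\
    (forall b : ERbar, (forall phi, in_supp f phi -> ER_le (Fin (phi x)) b) ->
        ER_le (f x) b).

Definition dom {X : HilbertSpace} (f : X -> ERbar) (x : X) : Prop := f x <> PInf.

Definition proper {X : HilbertSpace} (f : X -> ERbar) : Prop :=
  (exists phi, in_supp f phi) /\ (exists x, dom f x).

(* Main.v *)
Require Import Defs.
From Stdlib Require Import Reals Lra Psatz.
Open Scope R_scope.

Lemma hinner_zero (X : HilbertSpace) (w : X) : hinner hzero w = 0.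
Proof.
  assert (H := hinner_add X hzero hzero w). rewrite hadd_zero in H. lra.
Qed.

Lemma hinner_opp (X : HilbertSpace) (z w : X) : hinner (hopp z) w = - hinner z w.
Proof.
  assert (H := hinner_add X z (hopp z) w). rewrite hadd_opp, hinner_zero in H. lra.
Qed.

Lemma hinner_add_r (X : HilbertSpace) (x y z : X) :
  hinner z (hadd x y) = hinner z x + hinner z y.
Proof.
  rewrite (hinner_sym X z), (hinner_sym X z x), (hinner_sym X z y). apply hinner_add.
Qed.

Lemma hinner_opp_r (X : HilbertSpace) (z w : X) : hinner w (hopp z) = - hinner w z.
Proof. rewrite (hinner_sym X w), (hinner_sym X w z). apply hinner_opp. Qed.

Lemma decomp (X : HilbertSpace) (x xb : X) : x = hadd (hsub x xb) xb.
Proof.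
  unfold hsub. rewrite <- hadd_assoc, (hadd_comm X (hopp xb) xb), hadd_opp, hadd_zero.
  reflexivity.
Qed.

Lemma norm_bound (X : HilbertSpace) (y z : X) :
  hinner (hadd y z) (hadd y z) <= 2 * hinner y y + 2 * hinner z z.
Proof.
  assert (H := hinner_pos X (hadd y (hopp z))).
  rewrite !hinner_add, !hinner_add_r, !hinner_opp, !hinner_opp_r in *.
  rewrite (hinner_sym X z y) in *. lra.
Qed.

Lemma hnorm_sq (X : HilbertSpace) (x : X) : (hnorm x)^2 = hinner x x.
Proof. unfold hnorm. rewrite pow2_sqrt; [reflexivity| apply hinner_pos]. Qed.

Theorem mainTheorem2 (X : HilbertSpace) (f : X -> ERbar) (xbar : X) (fxbar : R)
  (Hproper : proper f) (Hconv : phi_lsc_convex f)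
  (Hdom : f xbar = Fin fxbar) :
  (exists rho delta : R, 0 <= rho /\ 0 < delta /\
     forall x : X, hnorm (hsub x xbar) < delta ->
       ER_le (Fin (fxbar - rho * (hnorm (hsub x xbar))^2)) (f x)) ->
  exists rhobar : R, 0 <= rhobar /\
     forall x : X, ER_le (Fin (fxbar - rhobar * (hnorm (hsub x xbar))^2)) (f x).
Proof.
  intros [rho [delta [Hrho [Hdel Hloc]]]].
  destruct Hproper as [[phi [[a [v [c [Ha [[_ [_ [C HC]]] Hphi]]]]] Hsupp]] _].
  set (Cp := Rabs C).
  assert (HCp : 0 <= Cp) by apply Rabs_pos.
  set (M := hinner xbar xbar).
  assert (HM : 0 <= M) by apply hinner_pos.
  set (K := 2 * (a + Cp) * M + Cp + Rabs c + Rabs fxbar).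
  assert (HK : 0 <= K).
  { unfold K. pose proof (Rabs_pos c). pose proof (Rabs_pos fxbar). nra. }
  exists (rho + 2 * (a + Cp) + K / (delta * delta)).
  assert (Hd2 : 0 < delta * delta) by nra.
  assert (HKd : 0 <= K / (delta * delta)) by (unfold Rdiv; apply Rmult_le_pos; [lra| left; apply Rinv_0_lt_compat; lra]).
  split; [lra|].
  intros x.
  destruct (Rlt_or_le (hnorm (hsub x xbar)) delta) as [Hlt|Hge].
  - specialize (Hloc x Hlt). destruct (f x) as [r|]; simpl in *; auto.
    pose proof (pow2_ge_0 (hnorm (hsub x xbar))). nra.
  - specialize (Hsupp x). destruct (f x) as [r|]; simpl in *; auto.
    eapply Rle_trans; [|exact Hsupp].
    rewrite Hphi. clear Hsupp Hphi.
    set (y := hsub x xbar).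
    assert (HN : hinner x x <= 2 * hinner y y + 2 * M).
    { rewrite (decomp X x xbar) at 1 2. apply norm_bound. }
    assert (Hd : hnorm y ^ 2 = hinner y y) by apply hnorm_sq.
    assert (Hx : hnorm x ^ 2 = hinner x x) by apply hnorm_sq.
    replace (hnorm y * (hnorm y * 1)) with (hnorm y ^ 2) by ring.
    replace (hnorm x * (hnorm x * 1)) with (hnorm x ^ 2) by ring.
    rewrite Hd, Hx.
    assert (HD : delta * delta <= hinner y y).
    { rewrite <- Hd. fold y in Hge. nra. }
    assert (Hv : - Cp * (1 + hinner x x) <= v x).
    { specialize (HC x). assert (Hnx : 0 <= hnorm x) by apply sqrt_pos.
      assert (C * hnorm x <= Cp * hnorm x).
      { apply Rmult_le_compat_r; [lra| apply RRle_abs]. }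
      assert (hnorm x <= 1 + hinner x x) by nra.
      pose proof (Rabs_Ropp (v x)). pose proof (RRle_abs (- v x)). nra. }
    assert (HKD : K <= K / (delta * delta) * hinner y y).
    { unfold Rdiv. rewrite Rmult_assoc.
      assert (1 <= / (delta * delta) * hinner y y).
      { apply (Rmult_le_reg_l (delta * delta)); [lra|].
        rewrite <- Rmult_assoc, Rinv_r by lra. lra. }
      nra. }
    assert (a * hinner x x <= a * (2 * hinner y y + 2 * M)) by nra.
    assert (Cp * hinner x x <= Cp * (2 * hinner y y + 2 * M)) by nra.
    pose proof (hinner_pos X y).
    pose proof (Rle_abs c). pose proof (Rle_abs fxbar).
    assert (HKK : fxbar - c + Cp + 2 * (a + Cp) * M <= K).
    { unfold K. pose proof (Rle_abs (- c)). rewrite Rabs_Ropp in *. lra. }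
    assert (0 <= rho * hinner y y) by nra.
    lra.
Qed.
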